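(* Let $m\ge 1$ be an integer and let $p,p'\in[0,1]$ satisfy $|p-p'|<1$; put $q=1-p$, $q'=1-p'$. Let $\{S_n:n\ge 0\}$ be the Markov chain on $\mathbb{Z}$ with $S_0=0$ and with $S_{n+1}-S_n\in\{-1,+1\}$, where \[ P(S_{n+1}-S_n=1\mid S_0,\dots,S_n)=p'\,1_{[S_n\in m\mathbb{Z}]}+p\,1_{[S_n\notin m\mathbb{Z}]} . \] Let $p^\ast_m$ denote the probability that this walk, started at $0$, reaches $m$ before it reaches $-m$ (equivalently, the constant probability of an up-step of the embedded walk $\{J_n\}$ on $m\mathbb{Z}$ described below). Then \[ p^\ast_m=\frac{p'p^{m-1}}{p'p^{m-1}+q'q^{m-1}} . \]
   Context: The walk in the claim is called the Parrondo game $G(m,p,p')$. Its embedded walk on the lattice $m\mathbb{Z}$ is defined via the times $T_0=0$, $T_1=\min\{n\ge 0: S_n\in m\mathbb{Z}\}$, $T_{k+1}=\min\{n>T_k: S_n-S_{T_k}=\pm m\}$ (minimum of the empty set is $+\infty$), and $J_n=m^{-1}S_{T_{n+1}}$; $\{J_n\}$ is a simple random walk on $\mathbb{Z}$ whose probability of a $+1$ step, $P(J_{n+1}-J_n=1\mid J_n)$, is the constant $p^\ast_m$. *)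

(* Defs.v *)
From HB Require Import structures.
From mathcomp Require Import all_boot all_order all_algebra.
From mathcomp Require Import all_classical all_reals all_analysis.
Set Implicit Arguments. Unset Strict Implicit. Unset Printing Implicit Defensive.
Import Order.TTheory GRing.Theory Num.Theory.
Local Open Scope ring_scope.

(* A sample path of n steps of the walk is encoded by its step sequence
   s : n.-tuple bool  (true = +1 step, false = -1 step). *)

Definition walk_pos (s : seq bool) (k : nat) : int :=
  \sum_(i < k) (if nth false s i then 1 else -1).

Definition up_prob (R : ringType) (m : nat) (p p' : R) (x : int) : R :=
  if (m%:Z %| x)%Z then p' else p.

Definition path_weight (R : ringType) (m : nat) (p p' : R) (s : seq bool) : R :=
  \prod_(i < size s)
     (if nth false s i then up_prob m p p' (walk_pos s i)
      else 1 - up_prob m p p' (walk_pos s i)).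

Definition hits_m_before_neg_m (m n : nat) (s : seq bool) : bool :=
  [exists k : 'I_n.+1,
     (walk_pos s k == m%:Z) && [forall j : 'I_k, walk_pos s j != - m%:Z]].

Definition hit_prob_upto (R : ringType) (m : nat) (p p' : R) (n : nat) : R :=
  \sum_(s : n.-tuple bool) path_weight m p p' s * (hits_m_before_neg_m m n s)%:R.

(* p*_m = P(reach m before -m) = lim_n P(reach m before -m within n steps). *)

(* Main.v *)
Require Import Defs.
From HB Require Import structures.
From mathcomp Require Import all_boot all_order all_algebra.
From mathcomp Require Import all_classical all_reals all_analysis.
From mathcomp Require Import zify ring lra.
Import Order.TTheory GRing.Theory Num.Theory.
Import numFieldNormedType.Exports.
Local Open Scope classical_set_scope.
Local Open Scope ring_scope.
Section Comb.
Variables (R : ringType) (m : nat) (p p' : R).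

Definition stp (b : bool) : int := if b then 1 else -1.
Definition upf (b : bool) (x : int) : R :=
  if b then up_prob m p p' x else 1 - up_prob m p p' x.

Fixpoint wR (x : int) (s : seq bool) : R :=
  match s with [::] => 1 | b :: s' => upf b x * wR (x + stp b) s' end.

Fixpoint hR (x : int) (s : seq bool) : bool :=
  (x == m%:Z) || ((x != - m%:Z) &&
    match s with [::] => false | b :: s' => hR (x + stp b) s' end).

Lemma walk_pos0 s : walk_pos s 0 = 0.
Proof. by rewrite /walk_pos big_ord0. Qed.

Lemma walk_pos_cons b s k : walk_pos (b :: s) k.+1 = stp b + walk_pos s k.
Proof. by rewrite /walk_pos big_ord_recl /=. Qed.

Lemma pw_gen x s :
  \prod_(i < size s) upf (nth false s i) (x + walk_pos s i) = wR x s.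
Proof.
elim: s x => [|b s IH] x /=; first by rewrite big_ord0.
rewrite big_ord_recl /= walk_pos0 addr0 -IH; congr (_ * _).
apply: eq_bigr => i _; by rewrite /bump /= walk_pos_cons addrA.
Qed.

Lemma pw0 s : path_weight m p p' s = wR 0 s.
Proof.
rewrite -pw_gen /path_weight; apply: eq_bigr => i _.
by rewrite add0r /upf; case: (nth false s i).
Qed.

Lemma hits_gen x s :
  [exists k : 'I_(size s).+1, (x + walk_pos s k == m%:Z) &&
     [forall j : 'I_k, x + walk_pos s j != - m%:Z]] = hR x s.
Proof.
elim: s x => [|b s IH] x.
  apply/idP/idP.
    case/existsP=> k /andP[Hk _]; move: Hk.
    by rewrite (ord1 k) /= walk_pos0 addr0 => ->.
  rewrite /= andbF orbF => Hx; apply/existsP; exists ord0.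
  by rewrite /= walk_pos0 addr0 Hx; apply/forallP => -[].
apply/idP/idP.
  case/existsP=> -[[|k] Hk] /= /andP[Hm Hj].
    by move: Hm; rewrite walk_pos0 addr0 => ->.
  apply/orP; right; apply/andP; split.
    have /forallP/(_ (Ordinal (ltn0Sn k))) := Hj.
    by rewrite /= walk_pos0 addr0.
  rewrite -IH; apply/existsP; exists (Ordinal (Hk : (k < (size s).+1)%N)).
  rewrite /= -addrA -walk_pos_cons Hm /=; apply/forallP => -[j Hjk] /=.
  have /forallP/(_ (Ordinal (Hjk : (j.+1 < k.+1)%N))) := Hj.
  by rewrite /= walk_pos_cons addrA.
rewrite /=; case/orP.
  move=> Hx; apply/existsP; exists ord0.
  by rewrite /= walk_pos0 addr0 Hx; apply/forallP => -[].
case/andP=> Hx /=; rewrite -IH; case/existsP=> -[k Hk] /= /andP[Hm Hj].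
apply/existsP; exists (Ordinal (Hk : (k.+1 < (size s).+2)%N)).
rewrite /= walk_pos_cons addrA Hm /=; apply/forallP => -[[|j] Hjk] /=.
  by rewrite walk_pos0 addr0.
have /forallP/(_ (Ordinal (Hjk : (j < k)%N))) := Hj.
by rewrite /= walk_pos_cons addrA.
Qed.

Lemma hits0 n s : size s = n -> hits_m_before_neg_m m n s = hR 0 s.
Proof.
move=> <-; rewrite -hits_gen /hits_m_before_neg_m; apply: eq_existsb => k.
rewrite add0r; congr andb; apply: eq_forallb => j; by rewrite add0r.
Qed.

Lemma sum_tupleS n (G : n.+1.-tuple bool -> R) :
  \sum_(t : n.+1.-tuple bool) G t =
  \sum_(b : bool) \sum_(t : n.-tuple bool) G [tuple of b :: t].
Proof.
rewrite pair_big /=.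
rewrite (reindex (fun bt : bool * n.-tuple bool => [tuple of bt.1 :: bt.2])) //=.
exists (fun t : n.+1.-tuple bool => (thead t, [tuple of behead t])).
  move=> [b t] _ /=; rewrite theadE; congr (_, _); exact: val_inj.
move=> t _ /=; rewrite [RHS]tuple_eta; exact: val_inj.
Qed.

Lemma sum_tuple0 (G : 0.-tuple bool -> R) :
  \sum_(t : 0.-tuple bool) G t = G [tuple].
Proof.
rewrite (eq_bigr (fun _ => G [tuple])); last by move=> t _; rewrite tuple0.
by rewrite sumr_const card_tuple.
Qed.

Lemma sum_w n x : \sum_(t : n.-tuple bool) wR x t = 1.
Proof.
elim: n x => [|n IH] x; first by rewrite sum_tuple0.
rewrite sum_tupleS big_bool /=.
rewrite -!big_distrr /= !IH !mulr1 /upf addrC subrK //.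
Qed.

Hypothesis m1 : (1 <= m)%N.

Fixpoint Frec (n : nat) (x : int) : R :=
  match n with
  | 0 => (x == m%:Z)%:R
  | n'.+1 => if x == m%:Z then 1 else if x == - m%:Z then 0 else
      up_prob m p p' x * Frec n' (x + 1) + (1 - up_prob m p p' x) * Frec n' (x - 1)
  end.

Lemma sumF n x :
  \sum_(t : n.-tuple bool) wR x t * (hR x t)%:R = Frec n x.
Proof.
elim: n x => [|n IH] x; first by rewrite sum_tuple0 /= andbF orbF mul1r.
rewrite sum_tupleS big_bool /=.
have [->|Hm] := eqP.
  rewrite /=.
  under eq_bigr do rewrite mulr1.
  under [X in _ + X]eq_bigr do rewrite mulr1.
  rewrite -!big_distrr /= !sum_w !mulr1 /upf addrC subrK //.
have [->|Hn] := eqP.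
  rewrite /= !big1 ?addr0 // => t _; by rewrite mulr0.
rewrite /=.
under eq_bigr do rewrite -mulrA.
under [X in _ + X]eq_bigr do rewrite -mulrA.
by rewrite -!big_distrr /= !IH /upf.
Qed.

Lemma hit_Frec n : hit_prob_upto m p p' n = Frec n 0.
Proof.
rewrite -sumF /hit_prob_upto; apply: eq_bigr => t _.
by rewrite pw0 (@hits0 n t (size_tuple t)).
Qed.

End Comb.
Arguments Frec {R}. Arguments hit_Frec {R}.

Lemma alg_key (R : comRingType) (m : nat) (p p' : R) (a b : nat -> R) :
  (1 <= m)%N ->
  a 0%N = b 0%N -> a m = 1 -> b m = 0 ->
  (forall i, (i.+2 <= m)%N -> a i.+1 = p * a i.+2 + (1 - p) * a i) ->
  (forall j, (j.+2 <= m)%N -> b j.+1 = p * b j + (1 - p) * b j.+2) ->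
  a 0%N = p' * a 1%N + (1 - p') * b 1%N ->
  p' * p ^+ m.-1 * (1 - a 0%N) = (1 - p') * (1 - p) ^+ m.-1 * a 0%N.
Proof.
move=> m1 ab0 am bm Ha Hb H0.
pose d i := a i.+1 - a i.
pose c i := b i - b i.+1.
have Hd : forall i, (i < m)%N -> p ^+ i * d i = (1 - p) ^+ i * d 0%N.
  elim=> [|i IH] Him; first by rewrite !expr0.
  have := Ha i Him; rewrite /d => E.
  have -> : p ^+ i.+1 * (a i.+2 - a i.+1) = (1 - p) * (p ^+ i * (a i.+1 - a i)).
    by rewrite exprS E; ring.
  by rewrite IH ?(ltnW Him) // exprS mulrA.
have Hc : forall i, (i < m)%N -> (1 - p) ^+ i * c i = p ^+ i * c 0%N.
  elim=> [|i IH] Him; first by rewrite !expr0.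
  have := Hb i Him; rewrite /c => E.
  have -> : (1 - p) ^+ i.+1 * (b i.+1 - b i.+2) = p * ((1 - p) ^+ i * (b i - b i.+1)).
    by rewrite exprS E; ring.
  by rewrite IH ?(ltnW Him) // exprS mulrA.
pose S := \sum_(i < m) p ^+ (m.-1 - i) * (1 - p) ^+ i.
have E1 : p ^+ m.-1 * (1 - a 0%N) = S * d 0%N.
  have -> : 1 - a 0%N = \sum_(i < m) d i.
    by rewrite -am -(telescope_sumr _ (leq0n m)) big_mkord.
  rewrite big_distrr big_distrl /=; apply: eq_bigr => i _.
  have Hi : (i < m)%N := ltn_ord i.
  have -> : p ^+ m.-1 = p ^+ (m.-1 - i) * p ^+ i by rewrite -exprD subnK //; lia.
  by rewrite -mulrA Hd // mulrA.
have E2 : (1 - p) ^+ m.-1 * a 0%N = S * c 0%N.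
  have -> : a 0%N = \sum_(i < m) c i.
    have := telescope_sumr b (leq0n m); rewrite big_mkord => T.
    transitivity (b 0%N - b m); first by rewrite ab0 bm subr0.
    rewrite -opprB -T -sumrN; apply: eq_bigr => i _; by rewrite opprB.
  rewrite /S (reindex_inj rev_ord_inj) /=.
  rewrite big_distrr big_distrl /=; apply: eq_bigr => i _.
  have Hi : (i < m)%N := ltn_ord i.
  have -> : (m - i.+1 = m.-1 - i)%N by lia.
  have -> : (1 - p) ^+ m.-1 = (1 - p) ^+ i * (1 - p) ^+ (m.-1 - i)
    by rewrite -exprD subnKC //; lia.
  rewrite -mulrA Hc; last by lia.
  by rewrite mulrA [_ ^+ i * _]mulrC.
have E0 : p' * d 0%N = (1 - p') * c 0%N.
  by rewrite /d /c -ab0 H0; ring.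
by rewrite -mulrA E1 -mulrA E2 mulrA [p' * S]mulrC -mulrA E0; ring.
Qed.

Section Anal.
Variables (R : realType) (m : nat) (p p' : R).
Hypothesis m1 : (1 <= m)%N.
Hypothesis hp : 0 <= p <= 1.
Hypothesis hp' : 0 <= p' <= 1.

Let F := Frec m p p'.

Lemma up_bnd x : 0 <= up_prob m p p' x <= 1.
Proof. by rewrite /up_prob; case: ifP. Qed.

Lemma F_bnd n x : 0 <= F n x <= 1.
Proof.
rewrite /F; elim: n x => [|n IH] x /=; first by case: eqP => _; rewrite ?lexx ?ler01.
case: ifP => _; first by rewrite ler01 lexx.
case: ifP => _; first by rewrite lexx ler01.
have /andP[u0 u1] := up_bnd x.
have /andP[a0 a1] := IH (x + 1); have /andP[b0 b1] := IH (x - 1).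
apply/andP; split; first by rewrite addr_ge0 // mulr_ge0 // subr_ge0.
nra.
Qed.

Lemma F_mono n x : F n x <= F n.+1 x.
Proof.
elim: n x => [|n IH] x.
  have /andP[h _] := F_bnd 1 x; move: h.
  rewrite /F /=; case: eqP => _ /= h; first exact: lexx.
  by rewrite mulr0n.
rewrite /F /=; case: ifP => _; first exact: lexx.
case: ifP => _; first exact: lexx.
have /andP[u0 u1] := up_bnd x.
apply: lerD; apply: ler_wpM2l; rewrite ?subr_ge0 //; exact: IH.
Qed.

Definition L x := sup (range (fun n => F n x)).

Lemma cvgL x : (fun n => F n x) @ \oo --> L x.
Proof.
apply: nondecreasing_cvgn.
  by apply/nondecreasing_seqP => n; exact: F_mono.
exists 1 => y [n _ <-]; by have /andP[] := F_bnd n x.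
Qed.

Lemma L_harm x : x != m%:Z -> x != - m%:Z ->
  L x = up_prob m p p' x * L (x + 1) + (1 - up_prob m p p' x) * L (x - 1).
Proof.
move=> /negbTE Hm /negbTE Hn.
have H1 := cvgL x; rewrite -cvg_shiftS /= in H1.
have H2 : (fun n => F n.+1 x) @ \oo -->
   up_prob m p p' x * L (x + 1) + (1 - up_prob m p p' x) * L (x - 1).
  have -> : (fun n => F n.+1 x) = (fun n => up_prob m p p' x * F n (x + 1) +
      (1 - up_prob m p p' x) * F n (x - 1)).
    by apply: funext => n; rewrite /F /= Hm Hn.
  by apply: cvgD; apply: cvgMr; exact: cvgL.
exact: (cvg_unique _ H1 H2).
Qed.

Lemma L_const x c : (forall n, F n x = c) -> L x = c.
Proof.
move=> Hc; have H1 := cvgL x.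
have H2 : (fun n => F n x) @ \oo --> c.
  have -> : (fun n => F n x) = (fun _ => c) by apply: funext => n.
  exact: cvg_cst.
exact: (cvg_unique _ H1 H2).
Qed.

End Anal.
Arguments L {R}. Arguments L_harm {R}. Arguments L_const {R}. Arguments cvgL {R}.

Theorem lemma2p1 (R : realType) (m : nat) (p p' : R) :
  (1 <= m)%N -> 0 <= p <= 1 -> 0 <= p' <= 1 -> `|p - p'| < 1 ->
  hit_prob_upto m p p' @ \oo -->
    (p' * p ^+ m.-1) / (p' * p ^+ m.-1 + (1 - p') * (1 - p) ^+ m.-1).
Proof.
move=> m1 hp hp' hpp.
have -> : hit_prob_upto m p p' = (fun n => Frec m p p' n 0).
  by apply: funext => n; exact: hit_Frec.
have LH := L_harm m p p' hp hp'.
have LC := L_const m p p' hp hp'.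
set L0 := L m p p' 0.
have Lm : L m p p' m%:Z = 1.
  by apply: LC => -[|n] /=; rewrite eqxx.
have Lnm : L m p p' (- m%:Z) = 0.
  have Hne : (- m%:Z == m%:Z) = false by apply/negbTE; lia.
  by apply: LC => -[|n] /=; rewrite Hne ?eqxx.
have upn : forall i : nat, (0 < i < m)%N ->
    up_prob m p p' i%:Z = p /\ up_prob m p p' (- i%:Z) = p.
  move=> i /andP[i0 im]; rewrite /up_prob !dvdzE abszN !absz_nat gtnNdvd //.
have up0 : up_prob m p p' 0 = p' by rewrite /up_prob dvdz0.
have key := @alg_key R m p p' (fun i => L m p p' i%:Z) (fun j => L m p p' (- j%:Z)) m1.
have E : p' * p ^+ m.-1 * (1 - L0) = (1 - p') * (1 - p) ^+ m.-1 * L0.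
  apply: key.
  - by congr (L _ _ _ _); lia.
  - exact: Lm.
  - exact: Lnm.
  - move=> i Hi; have [u _] := upn i.+1 ltac:(lia).
    rewrite LH ?u; [| lia | lia].
    have -> : (i.+1%:Z + 1 = i.+2%:Z) by lia.
    by have -> : (i.+1%:Z - 1 = i%:Z) by lia.
  - move=> j Hj; have [_ u] := upn j.+1 ltac:(lia).
    rewrite LH ?u; [| lia | lia].
    have -> : (- j.+1%:Z + 1 = - j%:Z) by lia.
    by have -> : (- j.+1%:Z - 1 = - j.+2%:Z) by lia.
  - rewrite /L0 LH ?up0; [| lia | lia].
    by rewrite add0r sub0r.
set A := p' * p ^+ m.-1 in E *.
set B := (1 - p') * (1 - p) ^+ m.-1 in E *.
have HD : A + B != 0.
  move: hp hp' hpp; rewrite ltr_norml => /andP[p0 p1] /andP[q0 q1] /andP[r0 r1].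
  rewrite paddr_eq0 ?mulr_ge0 ?exprn_ge0 ?subr_ge0 //.
  rewrite /A /B !mulf_eq0 !expf_eq0.
  apply/negP => /andP[/orP[/eqP H1|/andP[_ /eqP H1]] /orP[/eqP H2|/andP[_ /eqP H2]]]; lra.
have HA : A = L0 * (A + B).
  transitivity (A * (1 - L0) + A * L0); first by ring.
  by rewrite E; ring.
rewrite [X in X / _]HA mulfK //.
exact: (cvgL m p p' hp hp').
Qed.
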